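(* Let $q$ be a prime power and $1\le m\le n$. Identify each $n\times m$ matrix $M$ over $\mathbb{F}_q$ with the $m$-dimensional subspace $\overline{M}$ of $\mathbb{F}_q^{m+n}$ spanned by the columns of the $(m+n)\times m$ matrix $\begin{pmatrix} I_m\\ M\end{pmatrix}$. Let $f$ be a $\lambda$-eigenfunction of the bilinear forms graph $\mathrm{Bil}_q(n,m)$, where $\lambda=-\frac{q^m-1}{q-1}$ is its minimum eigenvalue. Define $\widehat f$ on the vertices of the Grassmann graph $J_q(n+m,m)$ by $\widehat f(\overline{M})=f(M)$ for every $n\times m$ matrix $M$, and $\widehat f(U)=0$ for every $m$-dimensional subspace $U$ not of the form $\overline{M}$. Then $\widehat f$ is a $\lambda$-eigenfunction of $J_q(n+m,m)$, and $\lambda$ is also the minimum eigenvalue of $J_q(n+m,m)$. *)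

(* Defs.v *)
From HB Require Import structures.
From mathcomp Require Import all_boot all_order all_algebra all_fingroup.
From mathcomp Require Import reals.
Set Implicit Arguments. Unset Strict Implicit. Unset Printing Implicit Defensive.
Import Order.TTheory GRing.Theory Num.Theory.
Local Open Scope ring_scope.

Definition eigenfunction (R : numDomainType) (V : finType) (adj : rel V)
  (f : V -> R) (lam : R) : Prop :=
  (exists v, f v != 0) /\
  (forall x : V, \sum_(y | adj x y) f y = lam * f x).

Definition is_eigenvalue (R : numDomainType) (V : finType) (adj : rel V) (lam : R) : Prop :=
  exists f : V -> R, eigenfunction adj f lam.

Definition is_min_eigenvalue (R : numDomainType) (V : finType) (adj : rel V) (lam : R) : Prop :=
  is_eigenvalue adj lam /\ forall mu : R, is_eigenvalue adj mu -> lam <= mu.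

Definition bil_adj (F : finFieldType) (n m : nat) : rel 'M[F]_(n, m) :=
  fun M N => \rank (M - N) == 1%N.

(* Grassmann graph J_q(N,m): vertices are the m-dimensional subspaces of F^N.
   A subspace is represented canonically (mxalgebra) by the square matrix
   <<A>>%MS whose row space it is. *)
Definition grass_vertex_pred (F : finFieldType) (N m : nat) : pred 'M[F]_N :=
  fun A => ((<<A>>%MS == A) && (\rank A == m))%N.

Definition grass_vertex (F : finFieldType) (N m : nat) :=
  {A : 'M[F]_N | grass_vertex_pred m A}.

Definition grass_adj (F : finFieldType) (N m : nat) : rel (grass_vertex F N m) :=
  fun U W => \rank (val U :&: val W)%MS == m.-1.

(* overline M : the m-dim subspace of F^(m+n) spanned by the columns of (I_m ; M),
   i.e. the row space of its transpose (I_m | M^T). *)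
Definition embed_mx (F : finFieldType) (n m : nat) (M : 'M[F]_(n, m)) : 'M[F]_(m, m + n) :=
  row_mx (1%:M : 'M[F]_m) M^T.

Definition lift_fun (R : numDomainType) (F : finFieldType) (n m : nat)
  (f : 'M[F]_(n, m) -> R) (U : grass_vertex F (m + n) m) : R :=
  match [pick M : 'M[F]_(n, m) | (embed_mx M == val U)%MS] with
  | Some M => f M
  | None => 0
  end.

(* Main.v *)
Require Import Defs.
From HB Require Import structures.
From mathcomp Require Import all_boot all_order all_algebra all_fingroup.
From mathcomp Require Import reals.
From mathcomp Require Import ring lra zify.
Set Implicit Arguments. Unset Strict Implicit. Unset Printing Implicit Defensive.
Import Order.TTheory GRing.Theory Num.Theory.
Local Open Scope ring_scope.

Section PSD.
Variables (R : realFieldType) (V I : finType) (inc : I -> V -> bool) (adj : rel V) (a b : R).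
Hypothesis hb : 0 < b.
Hypothesis hcnt : forall x y,
  \sum_i ((inc i x && inc i y)%:R : R) = (x == y)%:R * a + (adj x y)%:R * b.

Definition Ssum (g : V -> R) (i : I) := \sum_x (inc i x)%:R * g x.

Lemma key_id g x : \sum_i (inc i x)%:R * Ssum g i = a * g x + b * \sum_(y | adj x y) g y.
Proof.
rewrite /Ssum.
transitivity (\sum_y (\sum_i ((inc i x && inc i y)%:R : R)) * g y).
  under eq_bigr => i _ do rewrite mulr_sumr.
  rewrite exchange_big /=; apply: eq_bigr => y _; rewrite mulr_suml.
  by apply: eq_bigr => i _; case: (inc i x); case: (inc i y); rewrite /= ?mul0r ?mul1r.
under eq_bigr => y _ do rewrite hcnt mulrDl.
rewrite big_split /= (bigD1 x) //= eqxx big1 ?addr0; last first.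
  by move=> y /negbTE; rewrite eq_sym => ->; rewrite !mul0r.
rewrite mul1r; congr (_ + _); rewrite [RHS]mulr_sumr [RHS]big_mkcond /=.
by apply: eq_bigr => y _; case: (adj x y); rewrite /= ?mul0r ?mulr0 ?mul1r.
Qed.

Lemma quad_id g : \sum_x g x * (\sum_i (inc i x)%:R * Ssum g i) = \sum_i Ssum g i ^+ 2.
Proof.
under eq_bigr => x _ do rewrite mulr_sumr.
rewrite exchange_big /=; apply: eq_bigr => i _.
rewrite expr2 /Ssum mulr_suml; apply: eq_bigr => x _; ring.
Qed.

Lemma psd_lower g mu : (exists v, g v != 0) ->
  (forall x, \sum_(y | adj x y) g y = mu * g x) -> - (a / b) <= mu.
Proof.
move=> [v gv] he.
have hQ : 0 < \sum_x g x ^+ 2.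
  rewrite (bigD1 v) //=; apply: ltr_wpDr; first by apply: sumr_ge0 => ? _; apply: sqr_ge0.
  by rewrite exprn_even_gt0.
have h1 : (a + b * mu) * \sum_x g x ^+ 2 = \sum_i Ssum g i ^+ 2.
  rewrite -quad_id mulr_sumr; apply: eq_bigr => x _; rewrite key_id he; ring.
have h2 : 0 <= a + b * mu.
  have : 0 <= (a + b * mu) * \sum_x g x ^+ 2.
    by rewrite h1; apply: sumr_ge0 => ? _; apply: sqr_ge0.
  by rewrite pmulr_lge0.
have ha : a = a / b * b by rewrite divfK // gt_eqF.
move: h2; rewrite {1}ha (mulrC (a / b)) -mulrDr pmulr_rge0 //; lra.
Qed.

Lemma psd_zero g : (forall x, \sum_(y | adj x y) g y = - (a / b) * g x) ->
  forall i, Ssum g i = 0.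
Proof.
move=> he.
have h0 : \sum_i Ssum g i ^+ 2 = 0.
  rewrite -quad_id big1 // => x _; rewrite key_id he.
  have hb0 : b != 0 by rewrite gt_eqF.
  rewrite mulrA mulrN (mulrC b) divfK //; ring.
move=> i; apply/eqP; rewrite -sqrf_eq0; apply/eqP.
move/psumr_eq0P: h0; apply => // j _; exact: sqr_ge0.
Qed.

Lemma psd_eig g : (forall i, Ssum g i = 0) ->
  forall x, \sum_(y | adj x y) g y = - (a / b) * g x.
Proof.
move=> hz x; have := key_id g x; rewrite big1 => [h|i _]; last by rewrite hz mulr0.
have hb0 : b != 0 by rewrite gt_eqF.
have -> : \sum_(y | adj x y) g y = - (a * g x) / b.
  apply: (mulIf hb0); rewrite divfK // mulrC; apply/eqP; rewrite -addr_eq0 addrC -h //.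
by rewrite mulNr mulrAC mulNr.
Qed.
End PSD.

Lemma sumbE (T : finType) (P : pred T) : (\sum_(i : T) (P i : nat) = #|P|)%N.
Proof. by rewrite -sum1_card [RHS]big_mkcond /=; apply: eq_bigr => i _; rewrite unfold_in; case: (P i). Qed.

Section Mx.
Variable F : finFieldType.
Local Notation q := #|F|.

Lemma card_nz_F : #|[pred a : F | a != 0]| = q.-1.
Proof. by rewrite -(cardC1 (0 : F)); apply: eq_card => a; rewrite !inE. Qed.

Lemma card_line k (d0 : 'rV[F]_k) : d0 != 0 ->
  #|[pred e : 'rV_k | (e != 0) && (e <= d0)%MS]| = q.-1.
Proof.
move=> nz.
have inj : injective (fun a : F => a *: d0).
  move=> a b /eqP; rewrite -subr_eq0 -scalerBl scaler_eq0 (negbTE nz) orbF subr_eq0.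
  by move/eqP.
rewrite -card_nz_F -(card_image inj [pred a : F | a != 0]).
apply: eq_card => e; rewrite inE; apply/andP/imageP => [[ne /sub_rVP [a ea]]| [a ha ->]].
  exists a => //; rewrite inE; apply: contraNneq ne => a0; by rewrite ea a0 scale0r.
rewrite inE in ha; split; last exact: scalemx_sub.
by rewrite scaler_eq0 negb_or ha nz.
Qed.

Lemma card_sub_rV n m (e : 'rV[F]_m) : e != 0 ->
  #|[pred D : 'M[F]_(n,m) | (D <= e)%MS]| = (q ^ n)%N.
Proof.
move=> nz; have fe : row_free e by rewrite /row_free rank_rV nz.
have inj := row_free_inj (p := m) (m := n) fe.
rewrite -[X in (q ^ X)%N]muln1 -card_mx -(card_image inj).
apply: eq_card => D; rewrite inE; apply/submxP/imageP => [[u ->]|[u _ ->]]; by exists u.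
Qed.

Lemma nz_row_eqmx p k (V : 'M[F]_(p,k)) : \rank V = 1%N -> (nz_row V == V)%MS.
Proof.
move=> r1; rewrite -(geq_leqif (mxrank_leqif_eq (nz_row_sub V))) r1 rank_rV.
by rewrite nz_row_eq0 -mxrank_eq0 r1.
Qed.

Lemma nz_row_nz p k (V : 'M[F]_(p,k)) : \rank V = 1%N -> nz_row V != 0.
Proof. by move=> r1; rewrite nz_row_eq0 -mxrank_eq0 r1. Qed.

Lemma rV_sub_sym k (u v : 'rV[F]_k) : u != 0 -> v != 0 -> (u <= v)%MS = (v <= u)%MS.
Proof.
move=> nu nv; apply/idP/idP => h.
  by rewrite -(geq_leqif (mxrank_leqif_sup h)) !rank_rV nu nv.
by rewrite -(geq_leqif (mxrank_leqif_sup h)) !rank_rV nu nv.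
Qed.

Lemma cnt_vec p k (D : 'M[F]_(p,k)) :
  #|[pred e : 'rV_k | (e != 0) && (D <= e)%MS]| =
  if D == 0 then (q ^ k).-1 else if \rank D == 1%N then q.-1 else 0%N.
Proof.
case: eqP => [->|/eqP nD].
  rewrite -[X in (q ^ X)%N]mul1n -card_mx -(cardC1 (0 : 'rV_k)).
  by apply: eq_card => e; rewrite !inE sub0mx andbT.
case: eqP => [r1|r1].
  rewrite -(card_line (nz_row_nz r1)); apply: eq_card => e; rewrite !inE.
  case ne: (e != 0) => //=.
  have /eqmxP E := nz_row_eqmx r1.
  by rewrite -E (rV_sub_sym (nz_row_nz r1) ne).
apply: eq_card0 => e; rewrite !inE; apply/negP => /andP [ne sD].
have := mxrankS sD; rewrite rank_rV ne => h.
have : \rank D != 0%N by rewrite mxrank_eq0.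
by move: r1 h; case: (\rank D) => [|[|]].
Qed.

End Mx.




Section Bil.
Variables (F : finFieldType) (n m : nat).
Local Notation q := #|F|.

Definition binc (i : 'rV[F]_m * 'M[F]_(n,m)) (X : 'M[F]_(n,m)) : bool :=
  (i.1 != 0) && (X - i.2 <= i.1)%MS.

Lemma bil_cnt X Y : (\sum_i ((binc i X && binc i Y) : nat) =
  (X == Y) * (q ^ n * (q ^ m).-1) + bil_adj X Y * (q ^ n * q.-1))%N.
Proof.
transitivity (\sum_(e : 'rV_m) ((e != 0%R) && (Y - X <= e)%MS)%R * q ^ n)%N.
  transitivity (\sum_e \sum_N0 (binc (e,N0) X && binc (e,N0) Y : nat))%N.
    by rewrite pair_bigA; apply: eq_bigr => -[e N0].
  apply: eq_bigr => e _; rewrite /binc /=.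
  case: (eqVneq e 0) => [->|ne]; first by rewrite big1.
  rewrite /=.
  transitivity (\sum_N0 (((Y - X <= e)%MS && (X - N0 <= e)%MS)%R : nat))%N.
    apply: eq_bigr => N0 _; congr nat_of_bool.
    apply/andP/andP => [[h1 h2]|[h1 h2]]; split => //.
      have -> : Y - X = (Y - N0) + - (X - N0) by rewrite opprB addrA subrK.
      by apply: addmx_sub => //; rewrite eqmx_opp.
    have -> : Y - N0 = (Y - X) + (X - N0) by rewrite addrA subrK.
    exact: addmx_sub.
  case: (Y - X <= e)%MS; last by rewrite big1.
  rewrite mul1n.
  transitivity (\sum_(D : 'M[F]_(n,m)) ((D <= e)%MS : nat))%N; first by rewrite [RHS](reindex_inj (subrI X)).
  by rewrite sumbE card_sub_rV.
rewrite -big_distrl /= sumbE cnt_vec subr_eq0 /bil_adj.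
rewrite -mxrank_opp opprB.
case: (eqVneq Y X) => [->|nYX]; first by rewrite subrr mxrank0 /= mul1n addn0 mulnC.
by case: (\rank (X - Y) == 1%N); rewrite /= ?mul0n ?mul1n ?add0n /= // mulnC.
Qed.

End Bil.

Section Grass.
Variables (F : finFieldType) (N : nat).
Local Notation q := #|F|.
Local Notation gv k := (grass_vertex F N k).

Lemma gv_rank k (U : gv k) : \rank (val U) = k.
Proof. by case: U => A /= /andP [_ /eqP]. Qed.
Lemma gv_gen k (U : gv k) : <<val U>>%MS = val U.
Proof. by case: U => A /= /andP [/eqP]. Qed.
Lemma gv_inj k (U W : gv k) : (val U == val W)%MS -> U = W.
Proof.
move=> /eqmxP E; apply: val_inj; rewrite -gv_gen -(gv_gen W); exact: eq_genmx.
Qed.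

Lemma gvof_proof k p (K : 'M[F]_(p, N)) (h : \rank K = k) :
  grass_vertex_pred k <<K>>%MS.
Proof. by rewrite /grass_vertex_pred genmx_id mxrank_gen h !eqxx. Qed.

Definition gvof k p (K : 'M[F]_(p, N)) (h : \rank K = k) : gv k :=
  exist (fun A => grass_vertex_pred k A) <<K>>%MS (gvof_proof h).

Lemma unique_gv k p (K : 'M[F]_(p,N)) : \rank K = k ->
  (\sum_(U : gv k) ((K == val U)%MS : nat) = 1)%N.
Proof.
move=> h; rewrite (bigD1 (gvof h)) //= big1 ?addn0.
  by rewrite !genmxE submx_refl.
move=> U hU; apply/eqP; rewrite eqb0; apply: contra hU => hKU; apply/eqP.
by apply: gv_inj => /=; rewrite !genmxE andbC.
Qed.

Lemma m_pred_sub m : (1 <= m)%N -> (m - m.-1 = 1)%N.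
Proof. by case: m => //= k _; rewrite subSn // subnn. Qed.

Lemma gf m (B : 'M[F]_(m, N)) (Hm : 'M[F]_N) : (1 <= m)%N -> row_free B ->
  (Hm <= B)%MS -> \rank Hm = m.-1 ->
  (\sum_(e : 'rV[F]_m) (((e != 0) && (kermx e^T *m B == Hm)%MS)%R : nat) = q.-1)%N.
Proof.
move=> m1 fB sHB rH.
set Y := Hm *m pinvmx B.
have HY : Hm = Y *m B by rewrite mulmxKpV.
have rY : \rank Y = m.-1 by rewrite -(mxrankMfree _ fB) -HY.
have rK : \rank (kermx Y^T) = 1%N by rewrite mxrank_ker mxrank_tr rY m_pred_sub.
rewrite sumbE -(card_line (nz_row_nz rK)); apply: eq_card => e; rewrite !unfold_in /=.
case ne: (e != 0) => //=.
rewrite HY !submxMfree //.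
have rKe : \rank (kermx e^T) = m.-1 by rewrite mxrank_ker mxrank_tr rank_rV ne subn1.
have -> : ((kermx e^T <= Y) && (Y <= kermx e^T))%MS = (Y <= kermx e^T)%MS.
  apply/andP/idP => [[]//| h]; split=> //.
  by rewrite -(geq_leqif (mxrank_leqif_sup h)) rY rKe.
rewrite sub_kermx -trmx_eq0 trmx_mul trmxK -sub_kermx.
by have /eqmxP E := nz_row_eqmx rK; rewrite E.
Qed.

Lemma hyp_count m (U : gv m) : (1 <= m)%N ->
  ((\sum_(H : gv m.-1) ((val H <= val U)%MS : nat)) * q.-1 = (q ^ m).-1)%N.
Proof.
move=> m1.
have [B eqB] : exists B : 'M[F]_(m,N), (B == val U)%MS.
  exists (castmx (gv_rank U, erefl N) (row_base (val U))).
  apply/eqmxP; exact: (eqmx_trans (eqmx_cast _ _) (eq_row_base _)).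
have /eqmxP EB := eqB.
have fB : row_free B by rewrite /row_free EB gv_rank.
have sBU : (B <= val U)%MS by case/andP: eqB.
pose hyp (e : 'rV[F]_m) := kermx e^T *m B.
have rk e : e != 0 -> \rank (hyp e) = m.-1.
  by move=> ne; rewrite /hyp mxrankMfree // mxrank_ker mxrank_tr rank_rV ne subn1.
have sub e : (hyp e <= val U)%MS := submx_trans (submxMl _ _) sBU.
have -> : (q ^ m).-1 = (\sum_(e : 'rV[F]_m) ((e != 0)%R : nat))%N.
  rewrite sumbE -[X in (q ^ X)%N]mul1n -card_mx -(cardC1 (0:'rV_m)).
  by apply: eq_card => e; rewrite !inE.
transitivity (\sum_(e : 'rV[F]_m) \sum_(H : gv m.-1)
   (((e != 0) && (hyp e == val H)%MS)%R : nat))%N; last first.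
  apply: eq_bigr => e _; case ne: (e != 0) => /=; last by rewrite big1.
  by rewrite unique_gv // rk.
rewrite exchange_big /= big_distrl /=; apply: eq_bigr => H _.
case sH: (val H <= val U)%MS.
  by rewrite mul1n gf //; [rewrite EB | exact: gv_rank].
rewrite big1 // => e _; apply/eqP; rewrite eqb0; apply/negP => /andP [_ /andP [_ h]].
by move: sH; rewrite (submx_trans h (sub e)).
Qed.

Lemma grass_cnt_ne m (U W : gv m) : (1 <= m)%N -> U != W ->
  (\sum_(H : gv m.-1) (((val H <= val U)%MS && (val H <= val W)%MS) : nat)
     = grass_adj U W)%N.
Proof.
move=> m1 nUW.
under eq_bigr => H _ do rewrite -sub_capmx.
rewrite /grass_adj; case: eqP => [r|r].
  rewrite /= -(unique_gv r); apply: eq_bigr => H _; congr nat_of_bool.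
  apply/idP/andP => [h|[_ h]] //; split => //.
  by rewrite -(geq_leqif (mxrank_leqif_sup h)) r gv_rank.
rewrite big1 // => H _; apply/eqP; rewrite eqb0; apply/negP => h.
have r1 := mxrankS h; rewrite gv_rank in r1.
have r2 := mxrankS (capmxSl (val U) (val W)); rewrite gv_rank in r2.
have r3 : \rank (val U :&: val W)%MS = m by lia.
have cU : (val U <= val U :&: val W)%MS.
  by rewrite -(geq_leqif (mxrank_leqif_sup (capmxSl (val U) (val W)))) r3 gv_rank.
have sUW : (val U <= val W)%MS := submx_trans cU (capmxSr _ _).
move/negP: nUW; apply; apply/eqP; apply: gv_inj; rewrite sUW /=.
by rewrite -(geq_leqif (mxrank_leqif_sup sUW)) !gv_rank.
Qed.

End Grass.

Section Bridge.
Variables (F : finFieldType) (n m : nat).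

Lemma embed_sub p (H : 'M[F]_(p, m + n)) (M : 'M[F]_(n,m)) :
  (H <= embed_mx M)%MS = (rsubmx H == lsubmx H *m M^T).
Proof.
rewrite /embed_mx; apply/submxP/eqP => [[Z ->]|h].
  by rewrite mul_mx_row mulmx1 row_mxKr row_mxKl.
by exists (lsubmx H); rewrite mul_mx_row mulmx1 -h hsubmxK.
Qed.

Lemma embed_free (M : 'M[F]_(n,m)) : row_free (embed_mx M).
Proof.
apply/row_freeP; exists (col_mx 1%:M 0).
by rewrite /embed_mx mul_row_col mulmx0 addr0 mulmx1.
Qed.

Lemma embed_rank (M : 'M[F]_(n,m)) : \rank (embed_mx M) = m.
Proof. by have /eqnP := embed_free M. Qed.

Lemma embed_inj (M M' : 'M[F]_(n,m)) : (embed_mx M <= embed_mx M')%MS -> M = M'.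
Proof. by rewrite embed_sub /embed_mx row_mxKr row_mxKl mul1mx => /eqP; exact: trmx_inj. Qed.

Lemma lift_sum (R : numDomainType) (f : 'M[F]_(n,m) -> R) (U : grass_vertex F (m + n) m) :
  lift_fun f U = \sum_M ((embed_mx M == val U)%MS)%:R * f M.
Proof.
rewrite /lift_fun; case: pickP => [M hM|h].
  rewrite (bigD1 M) //= hM mul1r big1 ?addr0 // => M' hM'.
  case e: (embed_mx M' == val U)%MS; last by rewrite mul0r.
  exfalso; move/negP: hM'; apply; apply/eqP; apply: embed_inj.
  by move/andP: e => [e1 _]; move/andP: hM => [_ e2]; exact: submx_trans e1 e2.
by rewrite big1 // => M' _; rewrite h mul0r.
Qed.

Lemma lift_H (R : numDomainType) (f : 'M[F]_(n,m) -> R) (K : 'M[F]_(m + n)) :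
  \sum_(U : grass_vertex F (m + n) m) ((K <= val U)%MS)%:R * lift_fun f U =
  \sum_M ((K <= embed_mx M)%MS)%:R * f M.
Proof.
under eq_bigr => U _ do rewrite lift_sum mulr_sumr.
rewrite exchange_big /=; apply: eq_bigr => M _.
transitivity (\sum_(U : grass_vertex F (m + n) m)
   ((((K <= embed_mx M)%MS && (embed_mx M == val U)%MS) : nat)%:R * f M)).
  apply: eq_bigr => U _; rewrite mulrA; congr (_ * _).
  case e: (embed_mx M == val U)%MS; rewrite ?mulr0 ?andbF //= mulr1 andbT.
  by have /eqmxP E := e; rewrite E.
rewrite -mulr_suml -natr_sum; congr (_%:R * _).
case: (K <= embed_mx M)%MS => /=; last by rewrite big1.
exact: unique_gv (embed_rank M).
Qed.

Lemma Hsum_zero (R : realFieldType) (f : 'M[F]_(n,m) -> R) (K : 'M[F]_(m + n)) :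
  (1 <= m)%N -> \rank K = m.-1 ->
  (forall i, Ssum (@binc F n m) f i = 0) ->
  \sum_M ((K <= embed_mx M)%MS)%:R * f M = 0.
Proof.
move=> m1 rKm hz.
case: (pickP (fun M => (K <= embed_mx M)%MS)) => [N0 hN0|h]; last first.
  by rewrite big1 // => M _; rewrite h mul0r.
set L := lsubmx K.
have hr : rsubmx K = L *m N0^T by apply/eqP; rewrite -embed_sub.
have KL : K = L *m embed_mx N0 by rewrite /embed_mx mul_mx_row mulmx1 -hr hsubmxK.
have rL : \rank L = m.-1 by rewrite -(mxrankMfree _ (embed_free N0)) -KL.
have rK : \rank (kermx L^T) = 1%N by rewrite mxrank_ker mxrank_tr rL m_pred_sub.
transitivity (Ssum (@binc F n m) f (nz_row (kermx L^T), N0)); last exact: hz.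
rewrite /Ssum; apply: eq_bigr => M _; congr (_%:R * _).
rewrite /binc /= (nz_row_nz rK) /=.
have /eqmxP E := nz_row_eqmx rK; rewrite E sub_kermx embed_sub hr -/L.
rewrite -trmx_eq0 trmx_mul trmxK linearB /= mulmxBr subr_eq0 eq_sym.
by [].
Qed.

End Bridge.

Theorem mainTheorem8 (R : realType) (F : finFieldType) (n m : nat)
  (hm1 : (1 <= m)%N) (hmn : (m <= n)%N) (f : 'M[F]_(n, m) -> R) :
  let q : R := (#|F|)%:R in
  let lam : R := - ((q ^+ m - 1) / (q - 1)) in
  eigenfunction (@bil_adj F n m) f lam ->
  eigenfunction (@grass_adj F (m + n) m) (lift_fun f) lam /\
  is_min_eigenvalue (@grass_adj F (m + n) m) lam.
Proof.
move=> q lam [[v fv] he].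
have q1 : (1 < #|F|)%N := card_finNzRing_gt1 F.
have qp : (0 < #|F|.-1)%N by rewrite -subn1 subn_gt0.
have predR k : (0 < k)%N -> ((k.-1)%:R : R) = k%:R - 1.
  by move=> hk; rewrite -[k in RHS](prednK hk) -natr1 addrK.
have qmp : (0 < #|F| ^ m)%N by rewrite expn_gt0 ltnW.
have hlam : lam = - (((#|F| ^ m).-1)%:R / (#|F|.-1)%:R).
  by rewrite /lam /q !predR // ?natrX // ltnW.
have qn0 : (#|F|.-1)%:R != (0:R) by rewrite pnatr_eq0 -lt0n.
pose aB : R := (#|F| ^ n * (#|F| ^ m).-1)%:R.
pose bB : R := (#|F| ^ n * #|F|.-1)%:R.
have hbB : 0 < bB by rewrite ltr0n muln_gt0 expn_gt0 qp (ltnW q1).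
have habB : - (aB / bB) = lam.
  have h : (#|F| ^ n)%:R != (0:R) by rewrite pnatr_eq0 -lt0n expn_gt0 ltnW.
  rewrite hlam /aB /bB !natrM; congr (- _); field.
  by rewrite h qn0.
have hcB : forall X Y, \sum_i (((@binc F n m i X && binc i Y))%:R : R) =
    (X == Y)%:R * aB + (bil_adj X Y)%:R * bB.
  by move=> X Y; rewrite -natr_sum bil_cnt natrD /aB /bB !natrM.
have hz : forall i, Ssum (@binc F n m) f i = 0.
  by apply: (psd_zero hbB hcB) => x; rewrite habB he.
pose c := ((#|F| ^ m).-1 %/ #|F|.-1)%N.
have hc : forall U : grass_vertex F (m+n) m,
    (\sum_(H : grass_vertex F (m+n) m.-1) ((val H <= val U)%MS : nat))%N = c.
  by move=> U; rewrite /c -(hyp_count U hm1) mulnK.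
pose U0 := gvof (embed_rank v).
have cq : (c * #|F|.-1 = (#|F| ^ m).-1)%N by rewrite -(hc U0) hyp_count.
pose aG : R := c%:R.
have habG : - (aG / 1) = lam by rewrite divr1 hlam -cq natrM mulfK.
have hcG : forall U W : grass_vertex F (m+n) m,
    \sum_(H : grass_vertex F (m+n) m.-1)
      ((((val H <= val U)%MS && (val H <= val W)%MS))%:R : R) =
    (U == W)%:R * aG + (grass_adj U W)%:R * 1.
  move=> U W; rewrite -natr_sum; case: (eqVneq U W) => [<-|nUW].
    under eq_bigr do rewrite andbb.
    rewrite hc mul1r.
    have E : (val U :&: val U == val U)%MS by rewrite capmxSl sub_capmx submx_refl.
    rewrite /grass_adj (eqmx_rank E) gv_rank.
    case: (m) hm1 => // k _; rewrite /= gtn_eqF ?mul0r ?addr0 //.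
  by rewrite (grass_cnt_ne hm1 nUW) mul0r add0r mulr1.
have hzG : forall H, Ssum (fun (H : grass_vertex F (m+n) m.-1)
      (U : grass_vertex F (m+n) m) => (val H <= val U)%MS) (lift_fun f) H = 0.
  by move=> H; rewrite /Ssum lift_H; apply: Hsum_zero => //; exact: gv_rank.
have eigG : forall x, \sum_(y | grass_adj x y) lift_fun f y = lam * lift_fun f x.
  by move=> x; rewrite -habG; exact: (psd_eig ltr01 hcG hzG).
have nzG : exists U, lift_fun f U != 0.
  exists U0; rewrite lift_sum (bigD1 v) //= big1 ?addr0.
    by rewrite !genmxE submx_refl mul1r.
  move=> M hM; case e: (embed_mx M == <<embed_mx v>>)%MS; last by rewrite mul0r.
  move/andP: e => [e1 _]; rewrite genmxE in e1.
  by move/negP: hM; case; apply/eqP; apply: embed_inj.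
split; first by split.
split; first by exists (lift_fun f).
by move=> mu [g [gnz ge]]; rewrite -habG; exact: (psd_lower ltr01 hcG gnz ge).
Qed.
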